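(* Let $\mathcal C$ be a small abelian (or, more generally, Quillen exact) category with a tensor product that is exact in each variable and has a tensor identity $e$. Suppose either that the tensor product is commutative, or that there is an object $c\in\mathcal C$ such that no proper thick subcategory of $\mathcal C$ contains $c$. Then the set $L_{\mathrm{thick}}(\mathcal C)$ of thick tensor ideals of $\mathcal C$, ordered by inclusion and with product $(\mathcal D_1,\mathcal D_2)\mapsto\langle\mathcal D_1\mathcal D_2\rangle$, is an ideal lattice. Moreover, a thick tensor ideal is compact in this lattice if and only if it is of the form $\langle x\rangle$ for a single object $x$.
   Context: A tensor product on an additive category $\mathcal C$ is an additive bifunctor $\otimes\colon\mathcal C\times\mathcal C\to\mathcal C$ with a natural associativity isomorphism; a tensor identity $e$ comes with natural isomorphisms $x\otimes e\cong x\cong e\otimes x$ satisfying the pentagon and triangle axioms. A subcategory $\mathcal D$ is thick if for every exact sequence $0\to x'\to x\to x''\to0$, $x\in\mathcal D$ iff $x',x''\in\mathcal D$. A tensor ideal is a full additive subcategory $\mathcal D$ with $x\otimes y\in\mathcal D$ whenever $x\in\mathcal D$ or $y\in\mathcal D$. $\langle\mathcal D_0\rangle$ denotes the smallest thick tensor ideal containing a class $\mathcal D_0$; $\mathcal D_1\mathcal D_2$ denotes the class of finite coproducts of objects $x\otimes y$ with $x\in\mathcal D_1,y\in\mathcal D_2$ (up to isomorphism). An ideal lattice is a poset $(L,\leq)$ with an associative multiplication such that: (L1) $L$ is a complete lattice; (L2) every element is a supremum of compact elements ($a$ is compact if $a\leq\sup A$ implies $a\leq\sup A'$ for some finite $A'\subseteq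 A$); (L3) multiplication distributes over binary joins on both sides; (L4) $1=\sup L$ is compact and is a two-sided identity; (L5) products of compact elements are compact. *)

(* Defs.v *)
From HB Require Import structures.
From mathcomp Require Import all_boot all_algebra.
From Stdlib Require Import List.
Set Implicit Arguments.
Unset Strict Implicit.
Unset Printing Implicit Defensive.
Import GRing.Theory.
Local Open Scope ring_scope.

Record PreaddCat := {
  Ob : Type;
  Hom : Ob -> Ob -> zmodType;
  idm : forall a, Hom a a;
  comp : forall a b c, Hom b c -> Hom a b -> Hom a c;
  compA : forall a b c d (f : Hom c d) (g : Hom b c) (h : Hom a b),
      comp f (comp g h) = comp (comp f g) h;
  comp1m : forall a b (f : Hom a b), comp (idm b) f = f;
  compm1 : forall a b (f : Hom a b), comp f (idm a) = f;
  compDl : forall a b c (f f' : Hom b c) (g : Hom a b),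
      comp (f + f') g = comp f g + comp f' g;
  compDr : forall a b c (f : Hom b c) (g g' : Hom a b),
      comp f (g + g') = comp f g + comp f g'
}.
Arguments Hom {_} _ _.
Arguments idm {_} _.
Arguments comp {_ _ _ _} _ _.

Section Cat.
Variable C : PreaddCat.

Definition is_zero (z : Ob C) : Prop :=
  forall a : Ob C, (forall f : Hom z a, f = 0) /\ (forall f : Hom a z, f = 0).

Definition is_biprod (a b z : Ob C) : Prop :=
  exists (i1 : Hom a z) (i2 : Hom b z) (p1 : Hom z a) (p2 : Hom z b),
    [/\ comp p1 i1 = idm a, comp p2 i2 = idm b, comp p1 i2 = 0,
        comp p2 i1 = 0 & comp i1 p1 + comp i2 p2 = idm z].

Definition additive : Prop :=
  (exists z, is_zero z) /\ (forall a b, exists z, is_biprod a b z).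

Definition is_iso (a b : Ob C) (f : Hom a b) : Prop :=
  exists g : Hom b a, comp g f = idm a /\ comp f g = idm b.

Definition iso_obj (a b : Ob C) : Prop := exists f : Hom a b, is_iso f.

Definition is_kernel (k0 a b : Ob C) (k : Hom k0 a) (f : Hom a b) : Prop :=
  comp f k = 0 /\
  forall x (g : Hom x a), comp f g = 0 -> exists! h : Hom x k0, comp k h = g.

Definition is_cokernel (a b c0 : Ob C) (c : Hom b c0) (f : Hom a b) : Prop :=
  comp c f = 0 /\
  forall x (g : Hom b x), comp g f = 0 -> exists! h : Hom c0 x, comp h c = g.

Definition kc_pair (x' x x'' : Ob C) (i : Hom x' x) (p : Hom x x'') : Prop :=
  is_kernel i p /\ is_cokernel p i.

Definition is_pushout (a b c d : Ob C) (i : Hom a b) (f : Hom a c)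
    (i' : Hom c d) (f' : Hom b d) : Prop :=
  comp f' i = comp i' f /\
  forall x (g : Hom b x) (h : Hom c x), comp g i = comp h f ->
    exists! u : Hom d x, comp u f' = g /\ comp u i' = h.

Definition is_pullback (a b c d : Ob C) (p : Hom b c) (f : Hom a c)
    (p' : Hom d a) (f' : Hom d b) : Prop :=
  comp p f' = comp f p' /\
  forall x (g : Hom x b) (h : Hom x a), comp p g = comp f h ->
    exists! u : Hom x d, comp f' u = g /\ comp p' u = h.

(* A class of "conflations" (short exact sequences 0 -> x' -> x -> x'' -> 0) *)
Definition conflations := forall x' x x'' : Ob C, Hom x' x -> Hom x x'' -> Prop.

Section Exact.
Variable E : conflations.

Definition adm_mono (a b : Ob C) (i : Hom a b) : Prop :=
  exists (c : Ob C) (p : Hom b c), E i p.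
Definition adm_epi (b c : Ob C) (p : Hom b c) : Prop :=
  exists (a : Ob C) (i : Hom a b), E i p.

(* Quillen exact structure (Buehler's axioms) on an additive category *)
Definition exact_structure : Prop :=
  [/\ (forall x' x x'' (i : Hom x' x) (p : Hom x x''), E i p -> kc_pair i p),
      (forall x' x x'' (i : Hom x' x) (p : Hom x x'') y' y y''
              (j : Hom y' y) (q : Hom y y'')
              (u : Hom x' y') (v : Hom x y) (w : Hom x'' y''),
          E i p -> is_iso u -> is_iso v -> is_iso w ->
          comp v i = comp j u -> comp w p = comp q v -> E j q),
      (forall a, adm_mono (idm a)) /\ (forall a, adm_epi (idm a)),
      (forall a b c (i : Hom a b) (j : Hom b c),
          adm_mono i -> adm_mono j -> adm_mono (comp j i)) /\
      (forall a b c (p : Hom a b) (q : Hom b c),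
          adm_epi p -> adm_epi q -> adm_epi (comp q p)) &
      (forall a b (i : Hom a b), adm_mono i -> forall c (f : Hom a c),
          exists d (i' : Hom c d) (f' : Hom b d),
            is_pushout i f i' f' /\ adm_mono i') /\
      (forall b c (p : Hom b c), adm_epi p -> forall a (f : Hom a c),
          exists d (p' : Hom d a) (f' : Hom d b),
            is_pullback p f p' f' /\ adm_epi p')].

End Exact.

Record Tensor := {
  tob : Ob C -> Ob C -> Ob C;
  tom : forall a a' b b', Hom a a' -> Hom b b' -> Hom (tob a b) (tob a' b');
  tom_id : forall a b, tom (idm a) (idm b) = idm (tob a b);
  tom_comp : forall a a' a'' b b' b'' (f : Hom a' a'') (f' : Hom a a')
      (g : Hom b' b'') (g' : Hom b b'),
      tom (comp f f') (comp g g') = comp (tom f g) (tom f' g');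
  tom_addl : forall a a' b b' (f f' : Hom a a') (g : Hom b b'),
      tom (f + f') g = tom f g + tom f' g;
  tom_addr : forall a a' b b' (f : Hom a a') (g g' : Hom b b'),
      tom f (g + g') = tom f g + tom f g';
  assoc : forall a b c, Hom (tob (tob a b) c) (tob a (tob b c));
  assoc_iso : forall a b c, is_iso (assoc a b c);
  assoc_nat : forall a a' b b' c c' (f : Hom a a') (g : Hom b b') (h : Hom c c'),
      comp (assoc a' b' c') (tom (tom f g) h) =
      comp (tom f (tom g h)) (assoc a b c)
}.

Section TensorDefs.
Variable T : Tensor.
Local Notation "a ⊗ b" := (tob T a b) (at level 40, left associativity).
Local Notation "f ⊗m g" := (tom T f g) (at level 40, left associativity).

Definition tensor_unit (e : Ob C) : Prop :=
  exists (lu : forall x, Hom (e ⊗ x) x) (ru : forall x, Hom (x ⊗ e) x),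
  [/\ (forall x, is_iso (lu x)) /\ (forall x, is_iso (ru x)),
      (forall x y (f : Hom x y), comp f (lu x) = comp (lu y) (idm e ⊗m f)) /\
      (forall x y (f : Hom x y), comp f (ru x) = comp (ru y) (f ⊗m idm e)),
      (forall a b c d,
         comp (assoc T a b (c ⊗ d)) (assoc T (a ⊗ b) c d) =
         comp (idm a ⊗m assoc T b c d)
              (comp (assoc T a (b ⊗ c) d) (assoc T a b c ⊗m idm d))) &
      (forall a b, comp (idm a ⊗m lu b) (assoc T a e b) = ru a ⊗m idm b)].

Definition tensor_commutative : Prop :=
  exists g : forall x y, Hom (x ⊗ y) (y ⊗ x),
    (forall x y, is_iso (g x y)) /\
    (forall x x' y y' (f : Hom x x') (h : Hom y y'),
        comp (g x' y') (f ⊗m h) = comp (h ⊗m f) (g x y)).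

Variable E : conflations.

Definition tensor_exact : Prop :=
  forall x' x x'' (i : Hom x' x) (p : Hom x x''), E i p ->
    forall c, E (i ⊗m idm c) (p ⊗m idm c) /\ E (idm c ⊗m i) (idm c ⊗m p).

(* subcategories are given by predicates on objects (full subcategories) *)
Definition thick (D : Ob C -> Prop) : Prop :=
  forall x' x x'' (i : Hom x' x) (p : Hom x x''), E i p ->
    (D x <-> D x' /\ D x'').

Definition additive_subcat (D : Ob C -> Prop) : Prop :=
  (exists z, is_zero z /\ D z) /\
  (forall a b z, D a -> D b -> is_biprod a b z -> D z).

Definition tensor_ideal (D : Ob C -> Prop) : Prop :=
  additive_subcat D /\ (forall x y, D x \/ D y -> D (x ⊗ y)).

Definition thick_tensor_ideal (D : Ob C -> Prop) : Prop :=
  thick D /\ tensor_ideal D.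

(* <D0>: the smallest thick tensor ideal containing D0 *)
Definition gen (D0 : Ob C -> Prop) : Ob C -> Prop :=
  fun x => forall D, thick_tensor_ideal D -> (forall y, D0 y -> D y) -> D x.

Inductive fincoprod (S : Ob C -> Prop) : Ob C -> Prop :=
| fc_zero z : is_zero z -> fincoprod S z
| fc_sum a b z : S a -> fincoprod S b -> is_biprod a b z -> fincoprod S z.

Definition prodcls (D1 D2 : Ob C -> Prop) : Ob C -> Prop :=
  fincoprod (fun w => exists x y, [/\ D1 x, D2 y & iso_obj w (x ⊗ y)]).

Definition incl (D1 D2 : Ob C -> Prop) : Prop := forall x, D1 x -> D2 x.

Definition tprod (D1 D2 : Ob C -> Prop) : Ob C -> Prop := gen (prodcls D1 D2).

End TensorDefs.
End Cat.

(* Ideal lattices, on the carrier {a : X | P a}.                       *)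
Section IdealLattice.
Variables (X : Type) (P : X -> Prop) (le : X -> X -> Prop) (mul : X -> X -> X).

Definition is_sup_in (A : X -> Prop) (s : X) : Prop :=
  [/\ P s, (forall a, A a -> le a s) &
      (forall u, P u -> (forall a, A a -> le a u) -> le s u)].

Definition compact_in (a : X) : Prop :=
  P a /\
  forall (A : X -> Prop) s, (forall x, A x -> P x) -> is_sup_in A s -> le a s ->
    exists l : list X, (forall x, In x l -> A x) /\
      exists s', is_sup_in (fun x => In x l) s' /\ le a s'.

Definition ideal_lattice_on : Prop :=
  ((forall a b, P a -> P b -> P (mul a b)) /\
   (forall a b c, P a -> P b -> P c -> mul (mul a b) c = mul a (mul b c))) /\
  [/\ (forall a, P a -> le a a),
      (forall a b c, P a -> P b -> P c -> le a b -> le b c -> le a c) &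
      (forall a b, P a -> P b -> le a b -> le b a -> a = b)] /\
  (forall A, (forall x, A x -> P x) -> exists s, is_sup_in A s) /\
  (forall a, P a -> is_sup_in (fun c => compact_in c /\ le c a) a) /\
  (forall a b c j, P a -> P b -> P c ->
      is_sup_in (fun x => x = b \/ x = c) j ->
      is_sup_in (fun x => x = mul a b \/ x = mul a c) (mul a j) /\
      is_sup_in (fun x => x = mul b a \/ x = mul c a) (mul j a)) /\
  (exists t, [/\ is_sup_in P t, compact_in t &
                 forall a, P a -> mul t a = a /\ mul a t = a]) /\
  (forall a b, compact_in a -> compact_in b -> compact_in (mul a b)).

End IdealLattice.

(* Main.v *)
Require Import Defs.
From mathcomp Require Import all_boot all_algebra.
From Stdlib Require Import List FunctionalExtensionality PropExtensionality.
Import GRing.Theory.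
Require Import Defs.
Set Implicit Arguments.
Unset Strict Implicit.
Unset Printing Implicit Defensive.
Local Open Scope ring_scope.

Section Basics.
Variable C : PreaddCat.

Lemma comp0m (a b c : Ob C) (f : Hom a b) : comp (0 : Hom b c) f = 0.
Proof.
apply: (@addrI _ (comp (0 : Hom b c) f)); rewrite addr0 -compDl addr0 //.
Qed.

Lemma compm0 (a b c : Ob C) (f : Hom b c) : comp f (0 : Hom a b) = 0.
Proof.
apply: (@addrI _ (comp f (0 : Hom a b))); rewrite addr0 -compDr addr0 //.
Qed.

Lemma zero_idm (z : Ob C) : is_zero z -> idm z = 0.
Proof. by move=> Hz; case: (Hz z) => H _; apply: H. Qed.

Lemma zero_iso (z z' : Ob C) : is_zero z -> is_zero z' -> iso_obj z z'.
Proof.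
move=> Hz Hz'; exists 0; exists 0; split.
- by case: (Hz z) => H _; rewrite (H (comp 0 0)) (H (idm z)).
- by case: (Hz' z') => H _; rewrite (H (comp 0 0)) (H (idm z')).
Qed.

Lemma iso_refl (a : Ob C) : iso_obj a a.
Proof. by exists (idm a); exists (idm a); rewrite comp1m. Qed.

Lemma iso_sym (a b : Ob C) : iso_obj a b -> iso_obj b a.
Proof. by case=> f [g [H1 H2]]; exists g; exists f. Qed.

Lemma iso_trans (a b c : Ob C) : iso_obj a b -> iso_obj b c -> iso_obj a c.
Proof.
case=> f [g [H1 H2]] [f' [g' [H1' H2']]]; exists (comp f' f); exists (comp g g'); split.
- by rewrite Defs.compA -(Defs.compA g) H1' compm1 H1.
- by rewrite Defs.compA -(Defs.compA f') H2 compm1 H2'.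
Qed.

Lemma is_iso_obj (a b : Ob C) (f : Hom a b) : is_iso f -> iso_obj a b.
Proof. by exists f. Qed.

Variable E : conflations C.
Record AF := {
  Fo :> Ob C -> Ob C;
  Fm : forall a b, Hom a b -> Hom (Fo a) (Fo b);
  Fid : forall a, Fm (idm a) = idm (Fo a);
  Fcomp : forall a b c (f : Hom b c) (g : Hom a b), Fm (comp f g) = comp (Fm f) (Fm g);
  Fadd : forall a b (f g : Hom a b), Fm (f + g) = Fm f + Fm g;
  Fex : forall x' x x'' (i : Hom x' x) (p : Hom x x''), E i p -> E (Fm i) (Fm p)
}.

Arguments Fm _ {a b} f.

Lemma F0 (F : AF) a b : Fm F (0 : Hom a b) = 0.
Proof.
apply: (@addrI _ (Fm F (0 : Hom a b))); rewrite addr0 -Fadd addr0 //.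
Qed.

Lemma F_iso (F : AF) a b : iso_obj a b -> iso_obj (F a) (F b).
Proof.
case=> f [g [H1 H2]]; exists (Fm F f); exists (Fm F g).
by rewrite -!Fcomp H1 H2 !Fid.
Qed.

Lemma F_zero (F : AF) z : is_zero z -> is_zero (F z).
Proof.
move=> Hz a; split => f.
- by rewrite -(compm1 f) -Fid zero_idm // F0 compm0.
- by rewrite -(comp1m f) -Fid zero_idm // F0 comp0m.
Qed.

Lemma F_biprod (F : AF) a b z : is_biprod a b z -> is_biprod (F a) (F b) (F z).
Proof.
case=> i1 [i2 [p1 [p2 [H1 H2 H3 H4 H5]]]].
exists (Fm F i1), (Fm F i2), (Fm F p1), (Fm F p2); split.
- by rewrite -Fcomp H1 Fid.
- by rewrite -Fcomp H2 Fid.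
- by rewrite -Fcomp H3 F0.
- by rewrite -Fcomp H4 F0.
- by rewrite -!Fcomp -Fadd H5 Fid.
Qed.

Definition AFcomp (F G : AF) : AF.
refine (@Build_AF (fun x => F (G x)) (fun a b f => Fm F (Fm G f)) _ _ _ _).
- by move=> a; rewrite !Fid.
- by move=> a b c f g; rewrite !Fcomp.
- by move=> a b f g; rewrite !Fadd.
- by move=> x' x x'' i p H; apply: Fex; apply: Fex.
Defined.

End Basics.

Section Main.
Variables (C : PreaddCat) (E : conflations C) (T : Tensor C).
Hypotheses (HA : additive C) (HE : exact_structure E) (HT : tensor_exact T E).
Local Notation "a ⊗ b" := (tob T a b) (at level 40, left associativity).

Lemma iso_closed x' x x'' (i : Hom x' x) (p : Hom x x'') y' y y''
      (j : Hom y' y) (q : Hom y y'') (u : Hom x' y') (v : Hom x y) (w : Hom x'' y'') :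
  E i p -> is_iso u -> is_iso v -> is_iso w ->
  comp v i = comp j u -> comp w p = comp q v -> E j q.
Proof. by case: HE => _ H _ _ _; apply: H. Qed.

Lemma split_conf a b z (i1 : Hom a z) (i2 : Hom b z) (p1 : Hom z a) (p2 : Hom z b) :
  comp p1 i1 = idm a -> comp p2 i2 = idm b -> comp p1 i2 = 0 ->
  comp p2 i1 = 0 -> comp i1 p1 + comp i2 p2 = idm z -> E i1 p2.
Proof.
move=> H1 H2 H3 H4 H5.
case: HE => Hkc _ [_ Heid] _ [Hpo _].
have [k [j Ej]] := Heid b.
have [[Hj0 Hjk] _] := Hkc _ _ _ _ _ Ej.
have j0 : j = 0 by rewrite -Hj0 comp1m.
have Hk : is_zero k.
  have Hto : forall x (h : Hom x k), h = 0.
    move=> x h.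
    have [h0 [_ Hh0]] := Hjk x 0 (ltac:(by rewrite compm0)).
    have e1 : h0 = h by apply: Hh0; rewrite j0 comp0m.
    have e2 : h0 = 0 by apply: Hh0; rewrite compm0.
    by rewrite -e1 e2.
  move=> x; split => f; last exact: Hto.
  by rewrite -(compm1 f) (Hto _ (idm k)) compm0.
have jm : adm_mono E j by exists b, (idm b).
have [d [i' [f' [[Hpc Hpu] [c [q Eq]]]]]] := Hpo _ _ j jm a 0.
have [_ [Hqi Hqu]] := Hkc _ _ _ _ _ Eq.
have [v [[Hv1 Hv2] Hvu]] := Hpu z i2 i1 (ltac:(by rewrite j0 !compm0)).
pose v' := comp i' p1 + comp f' p2.
have vv' : comp v v' = idm z.
  by rewrite /v' compDr !Defs.compA Hv1 Hv2.
have v'v : comp v' v = idm d.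
  have [u0 [_ Hu0]] := Hpu d f' i' Hpc.
  rewrite -(Hu0 (idm d)); last by rewrite !comp1m.
  symmetry; apply: Hu0; split.
  - by rewrite -Defs.compA Hv1 /v' compDl -!Defs.compA H3 H2 compm0 compm1 add0r.
  - by rewrite -Defs.compA Hv2 /v' compDl -!Defs.compA H1 H4 compm0 compm1 addr0.
have [w [Hw Hwu]] := Hqu b (comp p2 v) (ltac:(by rewrite -Defs.compA Hv2)).
pose w' := comp q f'.
have ww' : comp w w' = idm b by rewrite /w' Defs.compA Hw -Defs.compA Hv1.
have w'w : comp w' w = idm c.
  have [u1 [_ Hu1]] := Hqu c q Hqi.
  rewrite -(Hu1 (idm c)); last by rewrite comp1m.
  symmetry; apply: Hu1.
  have e1 : comp (comp q f') p2 = comp q v'.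
    by rewrite /v' compDr Defs.compA Hqi comp0m add0r Defs.compA.
  by rewrite -Defs.compA Hw /w' Defs.compA e1 -Defs.compA v'v compm1.
apply: (@iso_closed _ _ _ i' q _ _ _ i1 p2 (idm a) v w) => //.
- by exists (idm a); rewrite comp1m.
- by exists v'.
- by exists w'.
- by rewrite Hv2 compm1.
Qed.


Definition tl (y : Ob C) : AF E.
refine (@Build_AF _ E (fun x => x ⊗ y) (fun a b f => tom T f (idm y)) _ _ _ _).
- by move=> a; rewrite tom_id.
- by move=> a b c f g; rewrite -tom_comp comp1m.
- by move=> a b f g; rewrite tom_addl.
- by move=> x' x x'' i p H; case: (HT H y).
Defined.

Definition tr (x : Ob C) : AF E.
refine (@Build_AF _ E (fun y => x ⊗ y) (fun a b f => tom T (idm x) f) _ _ _ _).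
- by move=> a; rewrite tom_id.
- by move=> a b c f g; rewrite -tom_comp comp1m.
- by move=> a b f g; rewrite tom_addr.
- by move=> x' x0 x'' i p H; case: (HT H x).
Defined.

Lemma iso_tl a b y : iso_obj a b -> iso_obj (a ⊗ y) (b ⊗ y).
Proof. exact: (F_iso (tl y)). Qed.
Lemma iso_tr a b x : iso_obj a b -> iso_obj (x ⊗ a) (x ⊗ b).
Proof. exact: (F_iso (tr x)). Qed.
Lemma iso_assoc a b c : iso_obj ((a ⊗ b) ⊗ c) (a ⊗ (b ⊗ c)).
Proof. exact: (is_iso_obj (assoc_iso T a b c)). Qed.

Lemma thick_iso D a b : thick E D -> iso_obj a b -> D b -> D a.
Proof.
move=> HD [f [g [H1 H2]]] Db.
case: HE => _ _ [Hmid _] _ _.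
have [c [p Ep]] := Hmid a.
have Ef : E f (comp p g).
  apply: (@iso_closed _ _ _ _ _ _ _ _ _ _ (idm a) f (idm c) Ep).
  - by exists (idm a); rewrite comp1m.
  - by exists g.
  - by exists (idm c); rewrite comp1m.
  - by [].
  - by rewrite comp1m -Defs.compA H1 compm1.
by case: ((HD _ _ _ _ _ Ef).1 Db).
Qed.

Lemma thick_iso' D a b : thick E D -> iso_obj a b -> D a -> D b.
Proof. by move=> HD /iso_sym; apply: thick_iso. Qed.

Lemma thick_biprod D a b z : thick E D -> is_biprod a b z -> (D z <-> D a /\ D b).
Proof.
move=> HD [i1 [i2 [p1 [p2 [H1 H2 H3 H4 H5]]]]].
exact: (HD _ _ _ _ _ (split_conf H1 H2 H3 H4 H5)).
Qed.

Lemma thick_zero D z0 z : thick E D -> D z0 -> is_zero z0 -> is_zero z -> D z.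
Proof. by move=> HD Dz0 H0 Hz; apply: (thick_iso HD (zero_iso Hz H0)). Qed.

Local Notation ttI := (thick_tensor_ideal T E).
Implicit Types (D : Ob C -> Prop).

Lemma ttI_thick D : ttI D -> thick E D. Proof. by case. Qed.
Lemma ttI_zero D z : ttI D -> is_zero z -> D z.
Proof.
move=> [HD [[[z0 [Hz0 Dz0]] _] _]] Hz; exact: (thick_zero HD Dz0 Hz0 Hz).
Qed.
Lemma ttI_iso D a b : ttI D -> iso_obj a b -> D b -> D a.
Proof. by move=> [HD _]; apply: thick_iso. Qed.
Lemma ttI_biprod D a b z : ttI D -> is_biprod a b z -> D a -> D b -> D z.
Proof. by move=> [HD _] Hz Da Db; apply/(thick_biprod HD Hz). Qed.
Lemma ttI_l D x y : ttI D -> D y -> D (x ⊗ y).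
Proof. by move=> [_ [_ H]] Dy; apply: H; right. Qed.
Lemma ttI_r D x y : ttI D -> D x -> D (x ⊗ y).
Proof. by move=> [_ [_ H]] Dx; apply: H; left. Qed.

Lemma ttI_intro D :
  thick E D -> (exists z, is_zero z /\ D z) ->
  (forall x y, D x -> D (x ⊗ y)) -> (forall x y, D y -> D (x ⊗ y)) -> ttI D.
Proof.
move=> HD Hz Hr Hl; split=> //; split.
- split=> // a b z Da Db Hab; exact/(thick_biprod HD Hab).
- by move=> x y [H|H]; [apply: Hr | apply: Hl].
Qed.

Lemma biprod_zero (a z : Ob C) : is_zero z -> is_biprod a z a.
Proof.
move=> Hz; exists (idm a), 0, (idm a), 0; split.
- by rewrite comp1m.
- by case: (Hz z) => H _; rewrite (H (comp 0 0)) (H (idm z)).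
- by rewrite comp1m.
- by rewrite comp0m.
- by rewrite comp1m compm0 addr0.
Qed.

Lemma fc_single (S : Ob C -> Prop) (a : Ob C) : S a -> fincoprod S a.
Proof.
case: HA => [[z Hz] _] Sa.
exact: (fc_sum Sa (fc_zero S Hz) (biprod_zero a Hz)).
Qed.

Lemma gen_sub (D0 : Ob C -> Prop) x : (D0 : Ob C -> Prop) x -> gen T E (D0 : Ob C -> Prop) x.
Proof. by move=> Hx D _ HD; apply: HD. Qed.
Lemma gen_min (D0 : Ob C -> Prop) D : ttI D -> (forall x, (D0 : Ob C -> Prop) x -> D x) -> forall x, gen T E (D0 : Ob C -> Prop) x -> D x.
Proof. by move=> HD Hs x Hx; apply: Hx. Qed.

Lemma gen_ttI (D0 : Ob C -> Prop) : ttI (gen T E D0).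
Proof.
apply: ttI_intro.
- move=> x' x x'' i p Hi; split.
  + move=> Hx; split=> D HD HsD; have := ((ttI_thick HD) _ _ _ _ _ Hi).1 (Hx D HD HsD); by case.
  + case=> H1 H2 D HD HsD; apply/((ttI_thick HD) _ _ _ _ _ Hi).2; split; [apply: H1|apply: H2] => //.
- case: HA => [[z Hz] _]; exists z; split=> // D HD _; exact: ttI_zero.
- by move=> x y Hx D HD HsD; apply: ttI_r => //; apply: Hx.
- by move=> x y Hx D HD HsD; apply: ttI_l => //; apply: Hx.
Qed.

Lemma gen_mono (D1 D2 : Ob C -> Prop) : (forall x, D1 x -> D2 x) ->
  forall x, gen T E D1 x -> gen T E D2 x.
Proof. move=> H; apply: gen_min; first exact: gen_ttI. by move=> x /H; apply: gen_sub. Qed.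

Lemma fincoprod_sub D (S : Ob C -> Prop) : ttI D -> (forall x, S x -> D x) ->
  forall x, fincoprod S x -> D x.
Proof.
move=> HD HS x; elim=> [z Hz|a b z Sa _ IH Hab]; first exact: ttI_zero.
exact: (ttI_biprod HD Hab (HS _ Sa) IH).
Qed.

Lemma fincoprod_mono (S S' : Ob C -> Prop) : (forall x, S x -> S' x) ->
  forall x, fincoprod S x -> fincoprod S' x.
Proof.
move=> H x; elim=> [z Hz|a b z Sa _ IH Hab]; first exact: fc_zero.
exact: (fc_sum (H _ Sa) IH Hab).
Qed.

Lemma tprod_le D D1 D2 : ttI D -> (forall x y, D1 x -> D2 y -> D (x ⊗ y)) ->
  forall w, tprod T E D1 D2 w -> D w.
Proof.
move=> HD H; apply: gen_min => //; apply: fincoprod_sub => // w [x [y [Hx Hy Hw]]].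
exact: (ttI_iso HD Hw (H _ _ Hx Hy)).
Qed.

Lemma tprod_in (D1 D2 : Ob C -> Prop) x y : D1 x -> D2 y -> tprod T E D1 D2 (x ⊗ y).
Proof. by move=> Hx Hy; apply: gen_sub; apply: fc_single; exists x, y; split=> //; apply: iso_refl. Qed.

Lemma tprod_ttI D1 D2 : ttI (tprod T E D1 D2).
Proof. exact: gen_ttI. Qed.

Lemma tprod_mono (D1 D2 D1' D2' : Ob C -> Prop) :
  (forall x, D1 x -> D1' x) -> (forall x, D2 x -> D2' x) ->
  forall w, tprod T E D1 D2 w -> tprod T E D1' D2' w.
Proof.
move=> H1 H2; apply: tprod_le; first exact: tprod_ttI.
by move=> x y /H1 Hx /H2 Hy; apply: tprod_in.
Qed.


Lemma K_left (c I : Ob C -> Prop) : (forall u v, c v -> c (u ⊗ v)) -> ttI I ->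
  ttI (fun x => forall y, c y -> I (x ⊗ y)).
Proof.
move=> Hc HI; apply: ttI_intro.
- move=> x' x x'' i p Hi.
  have H y := ttI_thick HI (Fex (tl y) Hi).
  split.
  + by move=> Hx; split=> y cy; case: ((H y).1 (Hx y cy)).
  + by case=> H1 H2 y cy; apply/(H y).2; split; [apply: H1|apply: H2].
- case: HA => [[z Hz] _]; exists z; split=> // y cy.
  exact: (ttI_zero HI (F_zero (tl y) Hz)).
- move=> x w Hx y cy.
  exact: (ttI_iso HI (iso_assoc x w y) (Hx _ (Hc w y cy))).
- move=> w x Hx y cy.
  exact: (ttI_iso HI (iso_assoc w x y) (ttI_l w HI (Hx y cy))).
Qed.

Lemma K_right (a I : Ob C -> Prop) : (forall x u, a x -> a (x ⊗ u)) -> ttI I ->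
  ttI (fun y => forall x, a x -> I (x ⊗ y)).
Proof.
move=> Ha HI; apply: ttI_intro.
- move=> x' x0 x'' i p Hi.
  have H x := ttI_thick HI (Fex (tr x) Hi).
  split.
  + by move=> Hx; split=> y cy; case: ((H y).1 (Hx y cy)).
  + by case=> H1 H2 y cy; apply/(H y).2; split; [apply: H1|apply: H2].
- case: HA => [[z Hz] _]; exists z; split=> // x ax.
  exact: (ttI_zero HI (F_zero (tr x) Hz)).
- move=> y w Hy x ax.
  exact: (ttI_iso HI (iso_sym (iso_assoc x y w)) (ttI_r w HI (Hy x ax))).
- move=> w y Hy x ax.
  exact: (ttI_iso HI (iso_sym (iso_assoc x w y)) (Hy _ (Ha x w ax))).
Qed.

Lemma pred_ext (D1 D2 : Ob C -> Prop) : (forall x, D1 x -> D2 x) -> (forall x, D2 x -> D1 x) -> D1 = D2.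
Proof.
move=> H1 H2; apply: functional_extensionality => x.
by apply: propositional_extensionality; split; [apply: H1|apply: H2].
Qed.

Lemma tprod_assoc a b c : ttI a -> ttI b -> ttI c ->
  tprod T E (tprod T E a b) c = tprod T E a (tprod T E b c).
Proof.
move=> Ha Hb Hc; apply: pred_ext.
- have HI := tprod_ttI a (tprod T E b c).
  have HK := @K_left c _ (fun u v (cv : c v) => ttI_l u Hc cv) HI.
  have Hab : forall x, tprod T E a b x -> forall y, c y -> tprod T E a (tprod T E b c) (x ⊗ y).
    apply: (tprod_le HK) => // x1 y1 Hx1 Hy1 y Hy.
    exact: (ttI_iso HI (iso_assoc x1 y1 y) (tprod_in Hx1 (tprod_in Hy1 Hy))).
  apply: (tprod_le HI) => // x y Hx Hy; exact: Hab.
- have HJ := tprod_ttI (tprod T E a b) c.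
  have HK := @K_right a _ (fun x u (ax : a x) => ttI_r u Ha ax) HJ.
  have Hbc : forall y, tprod T E b c y -> forall x, a x -> tprod T E (tprod T E a b) c (x ⊗ y).
    apply: (tprod_le HK) => // y1 z1 Hy1 Hz1 x Hx.
    exact: (ttI_iso HJ (iso_sym (iso_assoc x y1 z1)) (tprod_in (tprod_in Hx Hy1) Hz1)).
  apply: (tprod_le HJ) => // x y Hx Hy; exact: Hbc.
Qed.

Definition supD (A : (Ob C -> Prop) -> Prop) := gen T E (fun x => exists D, A D /\ D x).

Lemma sup_spec A : is_sup_in ttI (@incl C) A (supD A).
Proof.
split; first exact: gen_ttI.
- by move=> D AD x Dx; apply: gen_sub; exists D.
- by move=> u Hu Hub; apply: gen_min => // x [D [AD Dx]]; apply: (Hub D AD).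
Qed.


Definition gen1 (x : Ob C) := gen T E (fun y => y = x).

Lemma gen1_in x : gen1 x x.
Proof. exact: gen_sub. Qed.

Lemma gen1_compact x : compact_in ttI (@incl C) (gen1 x).
Proof.
split; first exact: gen_ttI.
move=> A s HAP [Ps Hub Hlub] Has.
pose U := fun y => exists l : list (Ob C -> Prop),
  (forall D, In D l -> A D) /\ supD (fun D => In D l) y.
have HU : ttI U.
  apply: ttI_intro.
  - move=> x' x0 x'' i p Hi; split.
    + case=> l [Hl Hy].
      have := (ttI_thick (gen_ttI _) Hi).1 Hy; case=> H1 H2.
      by split; exists l.
    + case=> [[l1 [Hl1 H1]] [l2 [Hl2 H2]]]; exists (l1 ++ l2); split.
      * by move=> D HD; case: (in_app_or _ _ _ HD) => ?; [apply: Hl1|apply: Hl2].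
      * apply: ((ttI_thick (gen_ttI _) Hi).2); split.
        -- apply: (gen_mono _ H1) => z [D [HD Dz]]; exists D; split=> //.
           by apply: in_or_app; left.
        -- apply: (gen_mono _ H2) => z [D [HD Dz]]; exists D; split=> //.
           by apply: in_or_app; right.
  - case: HA => [[z Hz] _]; exists z; split=> //; exists nil; split=> //.
    exact: (ttI_zero (gen_ttI _) Hz).
  - by move=> x0 y [l [Hl Hx]]; exists l; split=> //; exact: (ttI_r _ (gen_ttI _) Hx).
  - by move=> x0 y [l [Hl Hx]]; exists l; split=> //; exact: (ttI_l _ (gen_ttI _) Hx).
have sU : incl s U.
  apply: Hlub => // D AD z Dz; exists [:: D]; split.
  - by move=> D' [<-|[]].
  - by apply: gen_sub; exists D; split=> //; left.
have Hxs : s x := Has x (@gen1_in x).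
have HUx := sU x Hxs.
case: HUx => l [Hl Hx].
exists l; split=> //; exists (supD (fun D => In D l)); split; first exact: sup_spec.
by apply: (gen_min (gen_ttI _)) => y ->.
Qed.

Lemma compact_gen1 D : compact_in ttI (@incl C) D -> exists x, D = gen1 x.
Proof.
case=> HD Hc.
pose A := fun I => exists y, D y /\ I = gen1 y.
have HAP : forall I, A I -> ttI I by move=> I [y [_ ->]]; apply: gen_ttI.
have Hsup : is_sup_in ttI (@incl C) A D.
  split=> //.
  - by move=> I [y [Dy ->]]; apply: (gen_min HD) => z ->.
  - move=> u Hu Hub z Dz; apply: (Hub (gen1 z)); last exact: gen1_in.
    by exists z.
have [l [Hl [s' [[Ps' Hub' Hlub'] Hs']]]] := Hc A D HAP Hsup (fun x h => h).
have key : forall l0, (forall I, In I l0 -> A I) ->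
    exists x, D x /\ forall I, In I l0 -> incl I (gen1 x).
  elim=> [|I l0 IH] Hl0.
  - case: HA => [[z Hz] _]; exists z; split=> //; exact: (ttI_zero HD Hz).
  - have [x [Dx Hx]] := IH (fun I' h => Hl0 I' (or_intror h)).
    have [y [Dy ->]] := Hl0 I (or_introl erefl).
    case: HA => _ Hbp; have [w Hw] := Hbp y x.
    have Hyw := (thick_biprod (ttI_thick (gen_ttI _)) Hw).1 (@gen1_in w).
    exists w; split; first exact: (ttI_biprod HD Hw Dy Dx).
    move=> I' [<-|HI'].
    + by apply: (gen_min (gen_ttI _)) => z ->; case: Hyw.
    + move=> z Hz; apply: (gen_min (gen_ttI _) _ (Hx I' HI' z Hz)) => z' ->.
      by case: Hyw.
have [x [Dx Hx]] := key l Hl.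
exists x; apply: pred_ext.
- by move=> z Dz; apply: (Hlub' (gen1 x) (gen_ttI _) Hx); apply: Hs'.
- by apply: (gen_min HD) => z ->.
Qed.

Lemma compact_iff D : ttI D ->
  (compact_in ttI (@incl C) D <-> exists x, D = gen1 x).
Proof.
move=> HD; split; first exact: compact_gen1.
by case=> x ->; apply: gen1_compact.
Qed.


Lemma thick_pre (F : AF E) I : thick E I -> thick E (fun w => I (F w)).
Proof. by move=> HI x' x x'' i p Hi; exact: (HI _ _ _ _ _ (Fex F Hi)). Qed.

Definition topD : Ob C -> Prop := fun _ => True.

Lemma top_ttI : ttI topD.
Proof.
apply: ttI_intro => //.
case: HA => [[z Hz] _]; by exists z.
Qed.

Lemma L3 a b c j : ttI a -> ttI b -> ttI c ->
  is_sup_in ttI (@incl C) (fun x => x = b \/ x = c) j ->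
  is_sup_in ttI (@incl C) (fun x => x = tprod T E a b \/ x = tprod T E a c) (tprod T E a j) /\
  is_sup_in ttI (@incl C) (fun x => x = tprod T E b a \/ x = tprod T E c a) (tprod T E j a).
Proof.
move=> Ha Hb Hc [Pj Hubj Hlubj].
have bj := Hubj b (or_introl erefl).
have cj := Hubj c (or_intror erefl).
split; split; first exact: tprod_ttI.
- by move=> x [->|->]; apply: tprod_mono.
- move=> u Hu Hub.
  have Hab := Hub _ (or_introl erefl); have Hac := Hub _ (or_intror erefl).
  have HK := @K_right a _ (fun x w (ax : a x) => ttI_r w Ha ax) Hu.
  have jK := Hlubj _ HK.
  apply: (tprod_le Hu) => x y ax jy; apply: (jK _ _ jy) => //.
  move=> D [->|->] z Dz x' ax'.
  + exact: (Hab _ (tprod_in ax' Dz)).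
  + exact: (Hac _ (tprod_in ax' Dz)).
- exact: tprod_ttI.
- by move=> x [->|->]; apply: tprod_mono.
- move=> u Hu Hub.
  have Hba := Hub _ (or_introl erefl); have Hca := Hub _ (or_intror erefl).
  have HK := @K_left a _ (fun w x (ax : a x) => ttI_l w Ha ax) Hu.
  have jK := Hlubj _ HK.
  apply: (tprod_le Hu) => x y jx ay; apply: (jK _ _ jx) => //.
  move=> D [->|->] z Dz y' ay'.
  + exact: (Hba _ (tprod_in Dz ay')).
  + exact: (Hca _ (tprod_in Dz ay')).
Qed.

Variable e : Ob C.
Hypothesis Hu : tensor_unit T e.

Lemma unit_l y : iso_obj y (e ⊗ y).
Proof. by case: Hu => lu [ru [[Hlu Hru] _ _ _]]; apply: iso_sym; apply: (is_iso_obj (Hlu y)). Qed.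
Lemma unit_r y : iso_obj y (y ⊗ e).
Proof. by case: Hu => lu [ru [[Hlu Hru] _ _ _]]; apply: iso_sym; apply: (is_iso_obj (Hru y)). Qed.

Lemma top_gen1 : topD = gen1 e.
Proof.
apply: pred_ext => // y _.
exact: (ttI_iso (gen_ttI _) (unit_l y) (ttI_r y (gen_ttI _) (@gen1_in e))).
Qed.

Lemma top_unit a : ttI a -> tprod T E topD a = a /\ tprod T E a topD = a.
Proof.
move=> Ha; split; apply: pred_ext.
- by apply: (tprod_le Ha) => x y _ ay; apply: ttI_l.
- move=> y ay; exact: (ttI_iso (tprod_ttI _ _) (unit_l y) (tprod_in (I : topD e) ay)).
- by apply: (tprod_le Ha) => x y ax _; apply: ttI_r.
- move=> y ay; exact: (ttI_iso (tprod_ttI _ _) (unit_r y) (tprod_in ay (I : topD e))).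
Qed.

Lemma L5key x y g : tprod T E (gen1 x) (gen1 y) g ->
  (forall w, gen1 g (x ⊗ (w ⊗ y))) -> tprod T E (gen1 x) (gen1 y) = gen1 g.
Proof.
move=> Hg H; apply: pred_ext; last by apply: (gen_min (tprod_ttI _ _)) => z ->.
have HI := gen_ttI (fun z => z = g).
pose cy := fun v => exists w, iso_obj v (w ⊗ y).
have Hcy : forall u v, cy v -> cy (u ⊗ v).
  move=> u v [w Hv]; exists (u ⊗ w).
  exact: (iso_trans (iso_tr u Hv) (iso_sym (iso_assoc u w y))).
have HN := @K_left cy _ Hcy HI.
have xN : forall x1, gen1 x x1 -> forall v, cy v -> gen1 g (x1 ⊗ v).
  apply: (gen_min HN) => z -> v [w Hv].
  exact: (ttI_iso HI (iso_tr x Hv) (H w)).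
have HK := @K_right (gen1 x) _ (fun x0 w (ax : gen1 x x0) => ttI_r w (gen_ttI _) ax) HI.
have yK : forall y1, gen1 y y1 -> forall x1, gen1 x x1 -> gen1 g (x1 ⊗ y1).
  apply: (gen_min HK) => z -> x1 Hx1.
  by apply: xN => //; exists e; apply: unit_l.
by apply: (tprod_le HI) => x1 y1 Hx1 Hy1; apply: yK.
Qed.

Hypothesis Hyp : tensor_commutative T \/
   exists c : Ob C, forall D : Ob C -> Prop, thick E D -> D c -> forall x, D x.

Lemma L5gen x y : exists g, tprod T E (gen1 x) (gen1 y) = gen1 g.
Proof.
case: Hyp => [[gm [Hgi _]]|[c Hc]].
- exists (x ⊗ y); apply: L5key; first exact: tprod_in (@gen1_in x) (@gen1_in y).
  move=> w.
  have i1 : iso_obj (x ⊗ (w ⊗ y)) ((x ⊗ y) ⊗ w).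
    exact: (iso_trans (iso_tr x (is_iso_obj (Hgi w y))) (iso_sym (iso_assoc x y w))).
  exact: (ttI_iso (gen_ttI _) i1 (ttI_r w (gen_ttI _) (@gen1_in _))).
- exists (x ⊗ (c ⊗ y)); apply: L5key.
  + apply: tprod_in (@gen1_in x) _.
    exact: (ttI_l c (gen_ttI _) (@gen1_in y)).
  + move=> w.
    have Hth := thick_pre (AFcomp (tr x) (tl y)) (ttI_thick (gen_ttI (fun z => z = x ⊗ (c ⊗ y)))).
    exact: (Hc _ Hth (@gen1_in _) w).
Qed.

Lemma main_in :
  ideal_lattice_on (thick_tensor_ideal T E) (@incl C) (tprod T E) /\
  (forall D : Ob C -> Prop, thick_tensor_ideal T E D ->
     (compact_in (thick_tensor_ideal T E) (@incl C) D <->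
      exists x : Ob C, D = gen T E (fun y => y = x))).
Proof.
split; last first.
  by move=> D HD; apply: (compact_iff HD).
split; [split|split; [split|split; [|split; [|split; [|split]]]]].
- by move=> a b _ _; apply: tprod_ttI.
- by move=> a b c Ha Hb Hc; apply: (tprod_assoc).
- by move=> a _ x.
- by move=> a b c _ _ _ H1 H2 x /H1 /H2.
- by move=> a b _ _ H1 H2; apply: pred_ext.
- by move=> A _; exists (supD A); apply: sup_spec.
- move=> a Ha; split=> //.
  + by move=> c [_ H].
  + move=> u Pu Hub z az.
    apply: (Hub (gen1 z)); last exact: gen1_in.
    split; first exact: (gen1_compact).
    by apply: (gen_min Ha) => y ->.
- by move=> a b c j Ha Hb Hc Hj; apply: (L3).
- exists topD; split.
  + split; first exact: (top_ttI).
    * by [].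
    * by move=> u Pu Hub; apply: Hub; apply: (top_ttI).
  + rewrite (top_gen1); exact: (gen1_compact).
  + by move=> a Ha; apply: (top_unit).
- move=> a b Ca Cb.
  have [x ->] := compact_gen1 Ca.
  have [y ->] := compact_gen1 Cb.
  have [g ->] := L5gen x y.
  exact: (gen1_compact).
Qed.

End Main.

Theorem mainTheorem13 (C : PreaddCat) (E : conflations C) (T : Tensor C)
    (e : Ob C) :
  additive C ->
  exact_structure E ->
  tensor_exact T E ->
  tensor_unit T e ->
  (tensor_commutative T \/
   exists c : Ob C, forall D : Ob C -> Prop, thick E D -> D c -> forall x, D x) ->
  ideal_lattice_on (thick_tensor_ideal T E) (@incl C) (tprod T E) /\
  (forall D : Ob C -> Prop, thick_tensor_ideal T E D ->
     (compact_in (thick_tensor_ideal T E) (@incl C) D <->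
      exists x : Ob C, D = gen T E (fun y => y = x))).
Proof.
move=> HA HE HT Hu Hyp; exact: (main_in HA HE HT Hu Hyp).
Qed.
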